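(* Let $P$ be a finite poset with height function $h$ and let $D\ge1$ be an integer. Then $$\mathsf{Z}_{P,Dh}(x)=\mathsf{Z}_{P,h}\big|_{q=q^D}\!\left(\frac{(1+(q-1)x)^D-1}{q^D-1}\right),$$ where $\mathsf{Z}_{P,h}|_{q=q^D}$ denotes the polynomial obtained from $\mathsf{Z}_{P,h}$ by replacing $q$ by $q^D$ in its coefficients.
   Context: $q$ is an indeterminate; $[n]_q=(q^n-1)/(q-1)$. A height function on a finite poset $P$ is $h:P\to\mathbb{N}$ with $h(x)<h(y)$ whenever $y$ covers $x$ (so $Dh$ is again one). The $q$-Zeta polynomial $\mathsf{Z}_{P,h}\in\mathbb{Q}(q)[x]$ is the unique polynomial with $\mathsf{Z}_{P,h}([n]_q)=\sum_{e_1\le\cdots\le e_{n-1}\text{ in }P}q^{h(e_1)+\cdots+h(e_{n-1})}$ for all integers $n\ge2$ (such a polynomial exists). *)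

(* Defs.v *)
From HB Require Import structures.
From mathcomp Require Import all_boot all_order all_algebra.
From mathcomp Require Import generic_quotient fraction.
From Stdlib Require Import ClassicalEpsilon.
Set Implicit Arguments. Unset Strict Implicit. Unset Printing Implicit Defensive.
Import Order.TTheory GRing.Theory.
Local Open Scope ring_scope.

Definition Qq : fieldType := {fraction {poly rat}}.

Definition qv : Qq := tofrac ('X : {poly rat}).

Definition qint (n : nat) : Qq := (qv ^+ n - 1) / (qv - 1).

Definition covers (d : Order.disp_t) (P : finPOrderType d) (x y : P) : Prop :=
  (x < y)%O /\ ~ (exists z : P, (x < z)%O /\ (z < y)%O).

Definition is_height (d : Order.disp_t) (P : finPOrderType d) (h : P -> nat) : Prop :=
  forall x y : P, covers x y -> (h x < h y)%N.

Definition multichain_sum (d : Order.disp_t) (P : finPOrderType d) (h : P -> nat)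
  (k : nat) : Qq :=
  \sum_(t : k.-tuple P | sorted (<=%O) (tval t)) qv ^+ (\sum_(e <- tval t) h e)%N.

Definition is_qZeta (d : Order.disp_t) (P : finPOrderType d) (h : P -> nat)
  (Z : {poly Qq}) : Prop :=
  forall n : nat, (2 <= n)%N -> Z.[qint n] = multichain_sum h n.-1.

Definition qZeta (d : Order.disp_t) (P : finPOrderType d) (h : P -> nat) : {poly Qq} :=
  epsilon (inhabits 0) (is_qZeta h).

Definition subst_qpow (D : nat) (f : Qq) : Qq :=
  let r := repr f in
  tofrac ((\n_r) \Po 'X^D) / tofrac ((\d_r) \Po 'X^D).

Definition qpow_arg (D : nat) : {poly Qq} :=
  ((1 + (qv - 1)%:P * 'X) ^+ D - 1) * ((qv ^+ D - 1)^-1)%:P.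

(* Main.v *)
Require Import Defs.
From HB Require Import structures.
From mathcomp Require Import all_boot all_order all_algebra.
From mathcomp Require Import generic_quotient fraction ring.
From Stdlib Require Import ClassicalEpsilon.
Set Implicit Arguments. Unset Strict Implicit.
Import Order.TTheory GRing.Theory.
Local Open Scope ring_scope.
Local Open Scope quotient_scope.
Lemma frac_repr (R : idomainType) (f : {fraction R}) :
  f = tofrac (\n_(repr f)) / tofrac (\d_(repr f)).
Proof.
have hd : tofrac (\d_(repr f)) != 0.
  rewrite tofrac_eq0. exact: denom_ratioP.
suff e : f * tofrac (\d_(repr f)) = tofrac (\n_(repr f)) by rewrite -e mulfK.
rewrite -{1}[f]reprK.
move: (repr f) => x.
unlock tofrac.
rewrite !piE.
apply/eqmodP; rewrite /= FracField.equivfE /FracField.mulf.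
rewrite !numden_Ratio ?mulf_neq0 ?oner_eq0 ?denom_ratioP //.
by rewrite !mulr1 mulrC.
Qed.

Lemma fr_sub (F:fieldType) (x y z w : F): y != 0 -> w != 0 -> x/y - z/w = (x*w - z*y)/(y*w).
Proof. move=> hy hw. field. by rewrite hy hw. Qed.

Section Sig.
Variable D : nat.
Definition tf (p : {poly rat}) : Qq := tofrac p.
Definition cp (p : {poly rat}) : {poly rat} := p \Po 'X^(D.+1).

Lemma cp_neq0 p : p != 0 -> cp p != 0.
Proof. by move=> hp; rewrite /cp comp_poly_eq0 // size_polyXn. Qed.

Lemma tf_neq0 p : p != 0 -> tf p != 0.
Proof. by move=> hp; rewrite /tf tofrac_eq0. Qed.

Lemma subst_frac a b : b != 0 ->
  subst_qpow D.+1 (tf a / tf b) = tf (cp a) / tf (cp b).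
Proof.
move=> hb.
rewrite /subst_qpow.
set f := tf a / tf b.
have hf := @frac_repr _ f.
set n := \n_(repr f) in hf *. set d := \d_(repr f) in hf *.
have hd : d != 0 by exact: denom_ratioP.
have e : a * d = n * b.
  apply/eqP; rewrite -tofrac_eq tofracM tofracM.
  apply/eqP.
  have hb' := tf_neq0 hb. have hd' := tf_neq0 hd.
  move: hf; rewrite /f => hf.
  have := congr1 (fun z => z * tf b * tf d) hf.
  rewrite /= (divfK hb') [X in _ = X]mulrAC (divfK hd') => H.
  exact: H.
have e2 : cp a * cp d = cp n * cp b by rewrite /cp -!comp_polyM e.
have hb2 := tf_neq0 (cp_neq0 hb). have hd2 := tf_neq0 (cp_neq0 hd).
apply: (mulIf hb2); apply: (mulIf hd2).
rewrite divfK // -mulrA [_ * tf _]mulrC mulrA divfK //.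
by rewrite /tf -!tofracM e2.
Qed.

Definition sg := subst_qpow D.+1.

Lemma frac_ex (f : Qq) : exists a b, b != 0 /\ f = tf a / tf b.
Proof.
exists (\n_(repr f)), (\d_(repr f)); split; first exact: denom_ratioP.
exact: (@frac_repr _ f).
Qed.

Lemma tfB a b : tf (a - b) = tf a - tf b. Proof. exact: tofracB. Qed.
Lemma tfM a b : tf (a * b) = tf a * tf b. Proof. exact: tofracM. Qed.
Lemma tf1 : tf 1 = 1. Proof. exact: tofrac1. Qed.
Lemma cpB a b : cp (a - b) = cp a - cp b. Proof. exact: comp_polyB. Qed.
Lemma cpM a b : cp (a * b) = cp a * cp b. Proof. exact: comp_polyM. Qed.
Lemma cp1 : cp 1 = 1. Proof. exact: comp_polyC. Qed.

Lemma sg_zmod : zmod_morphism sg.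
Proof.
move=> f g.
have [a [b [hb ->]]] := frac_ex f.
have [c [e [he ->]]] := frac_ex g.
have hbe : b * e != 0 by rewrite mulf_neq0.
have hb' := tf_neq0 hb. have he' := tf_neq0 he.
have hb2 := tf_neq0 (cp_neq0 hb). have he2 := tf_neq0 (cp_neq0 he).
have -> : tf a / tf b - tf c / tf e = tf (a * e - c * b) / tf (b * e).
  by rewrite tfB !tfM fr_sub.
by rewrite /sg !subst_frac // cpB !cpM tfB !tfM fr_sub.
Qed.

Lemma sg_monoid : monoid_morphism sg.
Proof.
split.
  rewrite /sg -tf1 -[tf 1]divr1 -{2}tf1 subst_frac ?oner_eq0 //.
  by rewrite cp1 tf1 divr1.
move=> f g.
have [a [b [hb ->]]] := frac_ex f.
have [c [e [he ->]]] := frac_ex g.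
have hbe : b * e != 0 by rewrite mulf_neq0.
have hb2 := tf_neq0 (cp_neq0 hb). have he2 := tf_neq0 (cp_neq0 he).
have -> : tf a / tf b * (tf c / tf e) = tf (a * c) / tf (b * e).
  by rewrite !tfM invfM mulrACA.
rewrite /sg !subst_frac // !cpM !tfM.
by rewrite invfM mulrACA.
Qed.

HB.instance Definition _ := GRing.isZmodMorphism.Build Qq Qq sg sg_zmod.
HB.instance Definition _ := GRing.isMonoidMorphism.Build Qq Qq sg sg_monoid.

Lemma sg_tf a : sg (tf a) = tf (cp a).
Proof.
by rewrite -[tf a]divr1 -tf1 /sg subst_frac ?oner_eq0 // cp1 tf1 divr1.
Qed.

Lemma sg_qv : sg qv = qv ^+ D.+1.
Proof.
rewrite /qv -/(tf 'X) sg_tf /cp comp_polyX /tf.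
by rewrite tofracXn.
Qed.

End Sig.

Lemma qv_tf : qv = tf 'X. Proof. by []. Qed.

Lemma qvX (n : nat) : qv ^+ n = tf 'X^n.
Proof. by rewrite qv_tf /tf tofracXn. Qed.

Lemma qvX_inj m n : qv ^+ m = qv ^+ n -> m = n.
Proof.
rewrite !qvX => /eqP; rewrite /tf tofrac_eq => /eqP e.
by have := congr1 (fun p : {poly rat} => size p) e; rewrite !size_polyXn => -[].
Qed.

Lemma qv1 : qv - 1 != 0.
Proof.
rewrite -[qv]expr1 -(expr0 qv) subr_eq0; apply/eqP => /qvX_inj //.
Qed.

Lemma qvX_neq m n : m <> n -> qv ^+ m - qv ^+ n != 0.
Proof. by move=> hmn; rewrite subr_eq0; apply/eqP => /qvX_inj. Qed.

Lemma qv_neq0 : qv != 0.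
Proof. by rewrite qv_tf tf_neq0 // polyX_eq0. Qed.

Lemma qint_mul n : 1 + (qv - 1) * qint n = qv ^+ n.
Proof. by rewrite /qint mulrC divfK ?qv1 // addrC subrK. Qed.

Lemma qint_inj m n : qint m = qint n -> m = n.
Proof.
move=> e; apply: qvX_inj; by rewrite -!qint_mul e.
Qed.

Lemma poly_qint_eq0 (p : {poly Qq}) :
  (forall n, (2 <= n)%N -> p.[qint n] = 0) -> p = 0.
Proof.
move=> hp.
apply: (@roots_geq_poly_eq0 _ p [seq qint (i + 2) | i <- iota 0 (size p)]).
- apply/allP => x /mapP [i _ ->]; apply/eqP; apply: hp; exact: leq_addl.
- rewrite map_inj_uniq ?iota_uniq // => i j /qint_inj; apply: addIn.
- by rewrite size_map size_iota.
Qed.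

Lemma fr_rho (F : fieldType) (a x c : F) : a / c * x + c^-1 = (1 + a * x) / c.
Proof. by rewrite mulrDl mul1r addrC mulrAC. Qed.

Definition rho : {poly Qq} := ((qv - 1) / qv ^+ 2) *: 'X + ((qv ^+ 2)^-1)%:P.

Lemma rho_ev k : rho.[qint k.+2] = qv ^+ k.
Proof.
rewrite /rho hornerD hornerZ hornerX hornerC fr_rho qint_mul.
by rewrite -addn2 exprD mulfK // expf_neq0 // qv_neq0.
Qed.

Definition Eform (f : nat -> Qq) (s : seq (Qq * nat)) :=
  forall k, f k = \sum_(p <- s) p.1 * qv ^+ (p.2 * k).

Definition EX (Q : pred nat) (f : nat -> Qq) :=
  exists s, Eform f s /\ all (fun p => Q p.2) s.

Lemma EX_ext Q f g : (forall k, f k = g k) -> EX Q f -> EX Q g.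
Proof. by move=> e [s [hs hq]]; exists s; split=> // k; rewrite -e. Qed.

Lemma EX_mono (Q Q' : pred nat) f : (forall a, Q a -> Q' a) -> EX Q f -> EX Q' f.
Proof.
move=> hQ [s [hs hq]]; exists s; split=> //.
by apply/allP => p /(allP hq); apply: hQ.
Qed.

Lemma EX0 Q : EX Q (fun _ => 0).
Proof. by exists [::]; split=> // k; rewrite big_nil. Qed.

Lemma EXD Q f g : EX Q f -> EX Q g -> EX Q (fun k => f k + g k).
Proof.
move=> [s [hs hq]] [t [ht hqt]]; exists (s ++ t); split.
  by move=> k; rewrite big_cat hs ht.
by rewrite all_cat hq hqt.
Qed.

Lemma EXZ Q c f : EX Q f -> EX Q (fun k => c * f k).
Proof.
move=> [s [hs hq]]; exists [seq (c * p.1, p.2) | p <- s]; split.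
  move=> k; rewrite hs big_map mulr_sumr; apply: eq_bigr => p _ /=.
  by rewrite mulrA.
by rewrite all_map.
Qed.

Lemma EX_big (I : eqType) (r : seq I) (Q : pred nat) (F : I -> nat -> Qq) :
  (forall i, i \in r -> EX Q (F i)) -> EX Q (fun k => \sum_(i <- r) F i k).
Proof.
elim: r => [|i r IH] hF.
  by apply: (EX_ext _ (EX0 Q)) => k; rewrite big_nil.
apply: (EX_ext _ (EXD (hF i (mem_head _ _)) (IH _))).
  by move=> k; rewrite big_cons.
by move=> j hj; apply: hF; rewrite in_cons hj orbT.
Qed.

Lemma fr_rec (F : fieldType) (c Qa r Y : F) : Qa - r != 0 ->
  c / (Qa - r) * (Qa * Y) = r * (c / (Qa - r) * Y) + c * Y.
Proof. move=> h. field. exact: h. Qed.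

Lemma fr_lin (F : fieldType) (A r Y P G : F) :
  r * (A * Y + P) + G = A * (r * Y) + (r * P + G).
Proof. ring. Qed.

Lemma EX_rec b (U G : nat -> Qq) : EX (fun a => b < a)%N G ->
  (forall k, U k.+1 = qv ^+ b * U k + G k) -> EX (fun a => b <= a)%N U.
Proof.
move=> [s [hs hq]] hU.
pose s' := [seq (p.1 / (qv ^+ p.2 - qv ^+ b), p.2) | p <- s].
pose Pk := fun k => \sum_(p <- s') p.1 * qv ^+ (p.2 * k).
have hP : forall k, Pk k.+1 = qv ^+ b * Pk k + G k.
  move=> k; rewrite /Pk hs !big_map mulr_sumr -big_split /=.
  apply: eq_big_seq => p hp /=.
  have hne : qv ^+ p.2 - qv ^+ b != 0.
    apply: qvX_neq => e; have := allP hq p hp; rewrite /= e ltnn //.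
  by rewrite mulnS exprD fr_rec.
have hU' : forall k, U k = (U 0 - Pk 0) * qv ^+ (b * k) + Pk k.
  elim => [|k IH]; first by rewrite muln0 expr0 mulr1 subrK.
  by rewrite hU hP IH mulnS exprD fr_lin.
exists ((U 0 - Pk 0, b) :: s'); split.
  by move=> k; rewrite big_cons /= hU'.
rewrite /= leqnn /= all_map; apply/allP => p hp /=.
exact: ltnW (allP hq p hp).
Qed.

Section Poset.
Variables (d : Order.disp_t) (P : finPOrderType d) (h : P -> nat).
Hypothesis hh : is_height h.

Lemma height_lt x y : (x < y)%O -> (h x < h y)%N.
Proof.
have [n] := ubnP #|[pred z | (x < z)%O && (z < y)%O]|.
elim: n x y => // n IH x y hc hxy.
rewrite ltnS in hc.
case: (pickP [pred z | (x < z)%O && (z < y)%O]) => [z /andP [h1 h2] | none].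
  have c1 : (#|[pred w | (x < w)%O && (w < z)%O]| < n)%N.
    apply: leq_trans hc; apply: proper_card; apply/properP; split.
      apply/subsetP => w; rewrite !inE => /andP [a b].
      by rewrite a (lt_trans b h2).
    by exists z; rewrite !inE ?h1 ?h2 ?ltxx ?andbF.
  have c2 : (#|[pred w | (z < w)%O && (w < y)%O]| < n)%N.
    apply: leq_trans hc; apply: proper_card; apply/properP; split.
      apply/subsetP => w; rewrite !inE => /andP [a b].
      by rewrite b (lt_trans h1 a).
    by exists z; rewrite !inE ?h1 ?h2 ?ltxx.
  exact: ltn_trans (IH _ _ c1 h1) (IH _ _ c2 h2).
apply: hh; split => // -[z [a b]].
by have := none z; rewrite /= a b.
Qed.

Lemma sum_tuple_cons (F : seq P -> Qq) k :
  \sum_(t : k.+1.-tuple P) F t = \sum_(y : P) \sum_(t : k.-tuple P) F (y :: t).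
Proof.
rewrite pair_big /=.
rewrite (reindex (fun p : P * k.-tuple P => [tuple of p.1 :: p.2])) /=.
  by apply: eq_bigr => -[y t].
exists (fun t : k.+1.-tuple P => (thead t, [tuple of behead t])).
  move=> [y t] _ /=; rewrite theadE; congr (_, _); exact: val_inj.
by move=> t _ /=; rewrite -tuple_eta.
Qed.

Definition w (t : seq P) : Qq := qv ^+ (\sum_(e <- t) h e).

Lemma w_cons y t : w (y :: t) = qv ^+ h y * w t.
Proof. by rewrite /w big_cons exprD. Qed.

Definition U (x : P) k := \sum_(t : k.-tuple P | path <=%O x t) w t.

Lemma U_rec x k :
  U x k.+1 = qv ^+ h x * U x k + \sum_(y | (x < y)%O) qv ^+ h y * U y k.
Proof.
rewrite {1}/U big_mkcond /=.
rewrite (sum_tuple_cons (fun s => if path <=%O x s then w s else 0)) /=.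
have e : forall y, \sum_(t : k.-tuple P) (if (x <= y)%O && path <=%O y t then w (y :: t) else 0)
   = if (x <= y)%O then qv ^+ h y * U y k else 0.
  move=> y /=; case: (x <= y)%O => /=; last by rewrite big1.
  rewrite /U mulr_sumr [RHS]big_mkcond; apply: eq_bigr => t _.
  by case: (path <=%O y t); rewrite ?w_cons ?mulr0.
rewrite (eq_bigr _ (fun y _ => e y)) (bigD1 x) //= lexx; congr (_ + _).
rewrite [RHS]big_mkcond [LHS]big_mkcond; apply: eq_bigr => y _.
by rewrite lt_def; case: (y != x); case: (x <= y)%O.
Qed.

Lemma M_rec k : multichain_sum h k.+1 = \sum_(y : P) qv ^+ h y * U y k.
Proof.
rewrite /multichain_sum big_mkcond /=.
rewrite (sum_tuple_cons (fun s => if sorted <=%O s then w s else 0)) /=; apply: eq_bigr => y _.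
rewrite /U mulr_sumr [RHS]big_mkcond; apply: eq_bigr => t _.
by case: (path <=%O y t); rewrite ?w_cons ?mulr0.
Qed.


Lemma U_EX x : EX (fun a => h x <= a)%N (U x).
Proof.
have [n] := ubnP #|[pred y | (x < y)%O]|.
elim: n x => // n IH x hc.
rewrite ltnS in hc.
apply: (@EX_rec (h x) (U x) (fun k => \sum_(y | (x < y)%O) qv ^+ h y * U y k)); last exact: U_rec.
pose F := fun y k => if (x < y)%O then qv ^+ h y * U y k else 0.
apply: (@EX_ext _ (fun k => \sum_(y <- index_enum P) F y k)).
  by move=> k; rewrite [RHS]big_mkcond.
apply: EX_big => y _; rewrite /F.
case hxy: (x < y)%O; last exact: EX0.
have c : (#|[pred z | (y < z)%O]| < n)%N.
  apply: leq_trans hc; apply: proper_card; apply/properP; split.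
    apply/subsetP => z; rewrite !inE => a.
    exact: lt_trans hxy a.
  by exists y; rewrite !inE ?hxy ?ltxx.
apply: EXZ; apply: EX_mono (IH y c) => a ha.
exact: leq_trans (height_lt hxy) ha.
Qed.

Lemma M_EX : EX predT (fun k => multichain_sum h k.+1).
Proof.
apply: (@EX_ext _ (fun k => \sum_(y <- index_enum P) qv ^+ h y * U y k)).
  by move=> k; rewrite M_rec.
apply: EX_big => y _; apply: EXZ; exact: (EX_mono (fun _ _ => isT) (U_EX y)).
Qed.


Lemma qZeta_ex : exists Z, is_qZeta h Z.
Proof.
have [s [hs _]] := M_EX.
exists (\sum_(p <- s) p.1 *: rho ^+ p.2).
case=> [|[|k]] // _ /=.
rewrite horner_sum hs; apply: eq_bigr => p _.
rewrite hornerZ (@horner_exp Qq) rho_ev.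
by rewrite -exprM mulnC.
Qed.
End Poset.

Lemma qpow_ev D n : (qpow_arg D.+1).[qint n] = sg D (qint n).
Proof.
rewrite /qpow_arg (@hornerM Qq) (hornerC ((qv ^+ D.+1 - 1)^-1)).
rewrite hornerD hornerN (hornerC 1) (@horner_exp Qq) hornerD (hornerC 1).
rewrite (@hornerCM Qq) hornerX qint_mul.
rewrite /qint fmorph_div !rmorphB rmorph1 rmorphXn.
apply: (@eq_trans _ _ ((sg D qv ^+ n - 1)/(sg D qv - 1))); last by [].
by rewrite sg_qv exprAC.
Qed.

Lemma sg_multichain D (d : Order.disp_t) (P : finPOrderType d) (h : P -> nat) k :
  sg D (multichain_sum h k) = multichain_sum (fun x => (D.+1 * h x)%N) k.
Proof.
rewrite /multichain_sum rmorph_sum; apply: eq_bigr => t _.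
rewrite rmorphXn.
apply: (@eq_trans _ _ (sg D qv ^+ (\sum_(e <- tval t) h e)%N)); first by [].
rewrite sg_qv -exprM; congr (_ ^+ _).
elim: (tval t) => [|e s IH]; first by rewrite !big_nil muln0.
by rewrite !big_cons mulnDr IH.
Qed.

Unset Implicit Arguments.

Theorem mainTheorem17 (d : Order.disp_t) (P : finPOrderType d) (h : P -> nat)
  (D : nat) :
  is_height h -> (1 <= D)%N ->
  qZeta (fun x => (D * h x)%N) = (map_poly (subst_qpow D) (qZeta h)) \Po qpow_arg D.
Proof.
move=> hh; case: D => // D _.
have hZ : is_qZeta h (qZeta h) := epsilon_spec (inhabits 0) (is_qZeta h) (qZeta_ex hh).
set R := _ \Po _.
have hR : is_qZeta (fun x => (D.+1 * h x)%N) R.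
  move=> n hn.
  rewrite /R (@horner_comp Qq) qpow_ev.
  rewrite -[subst_qpow D.+1]/(sg D) (horner_map (sg D)) hZ //.
  exact: sg_multichain.
have hZ' : is_qZeta (fun x => (D.+1 * h x)%N) (qZeta (fun x => (D.+1 * h x)%N)).
  exact: (epsilon_spec (inhabits 0) _ (ex_intro _ R hR)).
apply/eqP; rewrite -subr_eq0; apply/eqP; apply: poly_qint_eq0 => n hn.
by rewrite hornerD hornerN hZ' // hR // subrr.
Qed.
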